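(* Let $G$ be a finite group, $H$ a subgroup of $G$, and $c \in G$ with $c \notin N(H)$, where $N(H) = \{g \in G : gHg^{-1} = H\}$ is the normalizer of $H$. Then \[ |H \cap cHc| \le \frac{|H|}{2}, \] where $cHc = \{chc : h \in H\}$. *)

(* Defs.v *)
From mathcomp Require Import all_boot all_fingroup.
Set Implicit Arguments. Unset Strict Implicit. Unset Printing Implicit Defensive.
Local Open Scope group_scope.

Definition twosided (gT : finGroupType) (c : gT) (H : {set gT}) : {set gT} :=
  [set c * h * c | h in H].

(* Main.v *)
Require Import Defs.
From mathcomp Require Import all_boot all_fingroup.
Local Open Scope group_scope.

Theorem lemma2 (gT : finGroupType) (G H : {group gT}) (c : gT) :
  H \subset G -> c \in G -> c \notin 'N_G(H) ->
  (2 * #|H :&: twosided c H| <= #|H|)%N.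
Proof.
move=> sHG cG ncN.
have ncH : c \notin 'N(H) by apply: contra ncN => cN; rewrite inE cG cN.
set K := (H :&: H :^ c^-1)%G.
have le1 : (#|H :&: twosided c H| <= #|K|)%N.
  case: (set_0Vmem (H :&: twosided c H)) => [-> | [x]]; first by rewrite cards0.
  rewrite inE => /andP[xH /imsetP[h0 h0H xE]]; rewrite xE in xH.
  rewrite -(card_in_imset (f := fun k => k * (c * h0 * c)^-1)); last first.
    by move=> a b _ _ /= /mulIg.
  apply: subset_leq_card; apply/subsetP => y /imsetP[k].
  rewrite inE => /andP[kH /imsetP[h hH kE]] ->; rewrite kE in kH *.
  rewrite inE; apply/andP; split.
    rewrite groupM ?groupV //.
  have -> : c * h * c * (c * h0 * c)^-1 = (h * h0^-1) ^ c^-1.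
    by rewrite /conjg invgK !invMg !mulgA mulgK.
  by rewrite memJ_conjg groupM ?groupV.
apply: leq_trans (leq_mul (leqnn 2) le1) _.
have sKH : K \subset H by apply: subsetIl.
have /dvdnP[m Hm] := cardSg sKH.
have Kpos : (0 < #|K|)%N := cardG_gt0 K.
case: m Hm => [|[|m]] Hm.
- by move: (cardG_gt0 H); rewrite Hm.
- exfalso; move/negP: ncH; apply.
  have sHJ : H \subset H :^ c^-1.
    have eKH : (K : {set gT}) = H.
      by apply/eqP; rewrite eqEcard sKH Hm mul1n leqnn.
    by rewrite -{1}eKH subsetIr.
  have eJ : H :^ c^-1 = H.
    by apply/esym/eqP; rewrite eqEcard sHJ cardJg leqnn.
  rewrite -groupV; apply/normP.
  exact: eJ.
- by rewrite Hm leq_mul2r ltnS ltnS leq0n orbT.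
Qed.
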